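(* For every finite simple graph $G$, $\operatorname{sdim}(G+K_1)>\operatorname{sdim}G$.
   Context: $G+K_1$ is $G$ together with one new vertex adjacent to all vertices of $G$. A unit-distance embedding of a graph $G$ in $\mathbb{R}^n$ is an injective map $f$ from the vertex set of $G$ to $\mathbb{R}^n$ such that $|f(u)-f(v)|=1$ for every edge $uv$ and no point $f(w)$ lies on the segment $[f(u),f(v)]$ for an edge $uv$ with $w\notin\{u,v\}$. $G$ admits a spherical embedding of dimension $k$ and radius $r$ if $G$ has a unit-distance embedding in $\mathbb{R}^k$ all of whose vertices lie on a sphere $\{x\in\mathbb{R}^k:|x-c|=r\}$. The spherical dimension $\operatorname{sdim}G$ is the least $k$ such that $G$ admits a spherical embedding of dimension $k$ and some radius $r<1$; by convention $\operatorname{sdim}$ of the graph with no vertices is $-\infty$ and $\operatorname{sdim}K_1=0$. *)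

(* Defs.v *)
From HB Require Import structures.
From mathcomp Require Import all_boot all_order all_algebra.
From mathcomp Require Import boolp Rstruct.
From Stdlib Require Rdefinitions.
Set Implicit Arguments. Unset Strict Implicit. Unset Printing Implicit Defensive.
Import Order.TTheory GRing.Theory Num.Theory.
Local Open Scope ring_scope.

Notation Real := Rdefinitions.R.

Definition simple_graph (T : finType) (e : rel T) : Prop :=
  symmetric e /\ irreflexive e.

Definition plusK1 (T : finType) (e : rel T) : rel (option T) :=
  fun x y => match x, y with
             | Some a, Some b => e a b
             | None, Some _ | Some _, None => true
             | None, None => false
             end.

Definition sqdist (k : nat) (x y : 'rV[Real]_k) : Real :=
  \sum_(i < k) (x ord0 i - y ord0 i) ^+ 2.

Definition on_segment (k : nat) (p a b : 'rV[Real]_k) : Prop :=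
  exists t : Real, 0 <= t <= 1 /\ p = (1 - t) *: a + t *: b.

Definition unit_dist_embedding (T : finType) (e : rel T) (k : nat)
  (f : T -> 'rV[Real]_k) : Prop :=
  injective f /\
  (forall u v, e u v -> sqdist (f u) (f v) = 1) /\
  (forall u v w, e u v -> w != u -> w != v -> ~ on_segment (f w) (f u) (f v)).

Definition spherical_embedding (T : finType) (e : rel T) (k : nat) (r : Real)
  : Prop :=
  0 <= r /\ exists (f : T -> 'rV[Real]_k) (c : 'rV[Real]_k),
    unit_dist_embedding e f /\ forall v, sqdist (f v) c = r ^+ 2.

Definition sdim_admissible (T : finType) (e : rel T) (k : nat) : Prop :=
  exists r : Real, r < 1 /\ spherical_embedding e k r.

(* Spherical dimension; None encodes -oo (graph with no vertices). When no
   admissible dimension exists (does not happen for finite graphs) the value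
   defaults to Some 0. *)
Definition sdim (T : finType) (e : rel T) : option nat :=
  if #|T| == 0%N :> nat then None else
  match pselect (exists k, `[< sdim_admissible e k >]) with
  | left H => Some (ex_minn H)
  | right _ => Some 0%N
  end.

Definition olt (a b : option nat) : bool :=
  match a, b with
  | None, Some _ => true
  | Some m, Some n => ltn m n
  | _, None => false
  end.

(* Main.v *)
Require Import Defs.
From HB Require Import structures.
From mathcomp Require Import all_boot all_order all_algebra ring lra.
From mathcomp Require Import boolp Rstruct.
Set Implicit Arguments. Unset Strict Implicit. Unset Printing Implicit Defensive.
Import Order.TTheory GRing.Theory Num.Theory.
Local Open Scope ring_scope.

Definition dot (k : nat) (x y : 'rV[Real]_k) : Real :=
  \sum_(i < k) x ord0 i * y ord0 i.

Lemma sqdist_dot k (x y : 'rV[Real]_k) : sqdist x y = dot (x - y) (x - y).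
Proof. rewrite /sqdist /dot; apply: eq_bigr => i _; rewrite !mxE; ring. Qed.

Lemma dotC k (x y : 'rV[Real]_k) : dot x y = dot y x.
Proof. rewrite /dot; apply: eq_bigr => i _; ring. Qed.

Lemma dotDl k (x y z : 'rV[Real]_k) : dot (x + y) z = dot x z + dot y z.
Proof. rewrite /dot -big_split /=; apply: eq_bigr => i _; rewrite !mxE; ring. Qed.

Lemma dotNl k (x z : 'rV[Real]_k) : dot (- x) z = - dot x z.
Proof. rewrite /dot -sumrN; apply: eq_bigr => i _; rewrite !mxE. ring. Qed.

Lemma dotBl k (x y z : 'rV[Real]_k) : dot (x - y) z = dot x z - dot y z.
Proof. by rewrite dotDl dotNl. Qed.

Lemma dotZl k a (x z : 'rV[Real]_k) : dot (a *: x) z = a * dot x z.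
Proof. rewrite /dot mulr_sumr; apply: eq_bigr => i _; rewrite !mxE; ring. Qed.

Lemma dotDr k (x y z : 'rV[Real]_k) : dot z (x + y) = dot z x + dot z y.
Proof. by rewrite dotC dotDl !(dotC z). Qed.
Lemma dotBr k (x y z : 'rV[Real]_k) : dot z (x - y) = dot z x - dot z y.
Proof. by rewrite dotC dotBl !(dotC z). Qed.
Lemma dotZr k a (x z : 'rV[Real]_k) : dot z (a *: x) = a * dot z x.
Proof. by rewrite dotC dotZl dotC. Qed.

Lemma dot_ge0 k (x : 'rV[Real]_k) : 0 <= dot x x.
Proof. rewrite /dot; apply: sumr_ge0 => i _; rewrite -expr2; exact: sqr_ge0. Qed.

Lemma dot_eq0 k (x : 'rV[Real]_k) : dot x x = 0 -> x = 0.
Proof.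
move=> H; apply/rowP => i; rewrite mxE.
have H' : \sum_(j < k) x ord0 j ^+ 2 = 0.
  rewrite -[RHS]H /dot; apply: eq_bigr => j _; by rewrite expr2.
have := psumr_eq0P (fun j (_ : true) => sqr_ge0 (x ord0 j)) H' (i:=i) isT.
by move/eqP; rewrite sqrf_eq0 => /eqP.
Qed.

Definition hh k (w y : 'rV[Real]_k) : 'rV[Real]_k :=
  y - (2 * dot y w / dot w w) *: w.

Lemma hhD k (w x y : 'rV[Real]_k) : hh w (x + y) = hh w x + hh w y.
Proof. rewrite /hh dotDl mulrDr mulrDl scalerDl opprD !addrA; congr (_ + _); rewrite -!addrA; congr (_ + _); exact: addrC. Qed.

Lemma hhZ k (w x : 'rV[Real]_k) a : hh w (a *: x) = a *: hh w x.
Proof. rewrite /hh dotZl scalerBr scalerA; congr (_ - _ *: _); ring. Qed.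

Lemma hhB k (w x y : 'rV[Real]_k) : hh w (x - y) = hh w x - hh w y.
Proof. by rewrite -scaleN1r hhD hhZ scaleN1r. Qed.

Lemma hh_dot k (w x y : 'rV[Real]_k) : dot (hh w x) (hh w y) = dot x y.
Proof.
rewrite /hh !(dotBl, dotBr, dotZl, dotZr).
have [W0|W0] := eqVneq (dot w w) 0.
  rewrite W0 invr0 !mulr0 !mul0r; ring.
rewrite (dotC w y); field; exact: W0.
Qed.

Lemma simplex_adm (S : finType) (e' : rel S) :
  irreflexive e' -> sdim_admissible e' #|S|.
Proof.
move=> irr.
set s : Real := Num.sqrt (1/2).
have s0 : 0 <= s by exact: sqrtr_ge0.
have s2 : s ^+ 2 = 1/2 by rewrite sqr_sqrtr //; lra.
have sne0 : s != 0 by apply/eqP => h; move: s2; rewrite h; lra.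
pose f (v : S) : 'rV[Real]_#|S| := \row_(i < #|S|) (if i == enum_rank v then s else 0).
exists s; split; first by nra.
split => //; exists f, 0; split; last first.
  move=> v; rewrite /sqdist (bigD1 (enum_rank v)) //= big1 => [|j /negbTE Hj].
    by rewrite !mxE eqxx subr0 addr0.
  by rewrite !mxE Hj subr0 expr0n.
split; [|split].
- move=> u v /rowP /(_ (enum_rank u)); rewrite !mxE eqxx.
  case: eqP => [/enum_rank_inj //|_ /eqP]; by rewrite (negbTE sne0).
- move=> u v euv.
  have nuv : enum_rank u != enum_rank v.
    by apply/eqP => /enum_rank_inj huv; move: euv; rewrite huv irr.
  rewrite /sqdist (bigD1 (enum_rank u)) //= (bigD1 (enum_rank v)) /=; last by rewrite eq_sym.
  rewrite big1 => [|j /andP [Hju Hjv]].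
    rewrite !mxE eqxx (negbTE nuv) eq_sym (negbTE nuv) eqxx; lra.
  by rewrite !mxE (negbTE Hju) (negbTE Hjv) subr0 expr0n.
- move=> u v w _ wu wv [t [_ /rowP /(_ (enum_rank w))]].
  rewrite !mxE eqxx.
  have -> : (enum_rank w == enum_rank u) = false.
    by apply/negbTE; apply: contra wu => /eqP /enum_rank_inj ->.
  have -> : (enum_rank w == enum_rank v) = false.
    by apply/negbTE; apply: contra wv => /eqP /enum_rank_inj ->.
  rewrite !mulr0 addr0 => /eqP; by rewrite (negbTE sne0).
Qed.

Definition proj k (y : 'rV[Real]_k.+1) : 'rV[Real]_k :=
  \row_(i < k) y ord0 (widen_ord (leqnSn k) i).

Lemma dot_split k (y y' : 'rV[Real]_k.+1) :
  dot y y' = dot (proj y) (proj y') + y ord0 ord_max * y' ord0 ord_max.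
Proof.
rewrite /dot big_ord_recr /=; congr (_ + _); apply: eq_bigr => i _; by rewrite !mxE.
Qed.

Lemma rowB k (A B : 'rV[Real]_k) j : (A - B) ord0 j = A ord0 j - B ord0 j.
Proof. by rewrite !mxE. Qed.
Lemma rowD k (A B : 'rV[Real]_k) j : (A + B) ord0 j = A ord0 j + B ord0 j.
Proof. by rewrite !mxE. Qed.
Lemma rowZ k (A : 'rV[Real]_k) a j : (a *: A) ord0 j = a * A ord0 j.
Proof. by rewrite !mxE. Qed.

Lemma projE k (y : 'rV[Real]_k.+1) i : proj y ord0 i = y ord0 (widen_ord (leqnSn k) i).
Proof. by rewrite mxE. Qed.
Lemma row0 k j : (0 : 'rV[Real]_k) ord0 j = 0.
Proof. by rewrite mxE. Qed.

Lemma dot0r k (y : 'rV[Real]_k) : dot y 0 = 0.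
Proof. rewrite /dot big1 // => i _; by rewrite mxE mulr0. Qed.

Lemma sqdist_refl k (y : 'rV[Real]_k) : sqdist y y = 0.
Proof. rewrite /sqdist big1 // => i _; by rewrite subrr expr0n. Qed.

Lemma sqdist0 k (y y' : 'rV[Real]_k) : sqdist y y' = 0 -> y = y'.
Proof. rewrite sqdist_dot => /dot_eq0 /eqP; rewrite subr_eq0 => /eqP //. Qed.

Lemma rV0_eq (y y' : 'rV[Real]_0) : y = y'.
Proof. by apply/rowP => -[]. Qed.

Lemma dotBB k (x y : 'rV[Real]_k) :
  dot (x - y) (x - y) = dot x x - 2 * dot x y + dot y y.
Proof. rewrite !(dotBl, dotBr) (dotC y x); ring. Qed.

Lemma hh_key k (u a : 'rV[Real]_k) :
  dot u u = dot a a -> 2 * dot u (u - a) = dot (u - a) (u - a).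
Proof. move=> H; rewrite !(dotBl, dotBr) (dotC a u) H; ring. Qed.

Lemma hhE k (w y : 'rV[Real]_k) : hh w y = y - (2 * dot y w / dot w w) *: w.
Proof. by []. Qed.
Opaque hh.

Lemma reduce (T : finType) (e : rel T) k (x0 : T) :
  sdim_admissible (plusK1 e) k -> exists k', k = k'.+1 /\ sdim_admissible e k'.
Proof.
move=> [r [r1 [r0 [f [c [[finj [fedge fseg]] fsph]]]]]].
case: k f c finj fedge fseg fsph => [|k] f c finj fedge fseg fsph.
  by have := finj None (Some x0) (rV0_eq _ _).
exists k; split => //.
have fsph' : forall v, dot (f v - c) (f v - c) = r ^+ 2.
  by move=> v; rewrite -sqdist_dot fsph.
set u := f None - c.
have uu : dot u u = r ^+ 2 by exact: fsph'.
have rne0 : r != 0.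
  apply/eqP => r00.
  have h1 : f None = c by apply/eqP; rewrite -subr_eq0; apply/eqP/dot_eq0; rewrite fsph' r00 expr0n.
  have h2 : f (Some x0) = c by apply/eqP; rewrite -subr_eq0; apply/eqP/dot_eq0; rewrite fsph' r00 expr0n.
  by have := finj None (Some x0) (etrans h1 (esym h2)).
pose a : 'rV[Real]_k.+1 := \row_(i < k.+1) (if i == ord_max then r else 0).
have proja : proj a = 0.
  apply/rowP => i; rewrite !mxE.
  have -> : (widen_ord (leqnSn k) i == ord_max) = false.
    by apply/negbTE; rewrite -val_eqE /= neq_ltn ltn_ord.
  by [].
have dota : forall y, dot y a = y ord0 ord_max * r.
  by move=> y; rewrite dot_split proja dot0r add0r mxE eqxx.
have aa : dot a a = r ^+ 2 by rewrite dota mxE eqxx expr2.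
set w := u - a.
have hhu : hh w u = a.
  rewrite hhE.
  have [W0|W0] := eqVneq (dot w w) 0.
    have w0 := dot_eq0 W0.
    by rewrite w0 scaler0 subr0; apply/eqP; rewrite -subr_eq0; apply/eqP.
  have -> : 2 * dot u w / dot w w = 1.
    apply/eqP; rewrite -(can_eq (mulfK W0)) mul1r divfK //; apply/eqP.
    by rewrite /w hh_key // uu aa.
  by rewrite scale1r /w opprB addrC subrK.
pose z x := f (Some x) - c.
set h : Real := (2 * r ^+ 2 - 1) / (2 * r).
have lastz : forall x, (hh w (z x)) ord0 ord_max = h.
  move=> x.
  have E : dot (z x) u = (2 * r ^+ 2 - 1) / 2.
    have e1 := fedge (Some x) None isT.
    rewrite sqdist_dot in e1.
    have : f (Some x) - f None = z x - u by rewrite /z /u opprB addrA subrK.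
    move=> E1; rewrite E1 dotBB uu /z fsph' in e1.
    rewrite /z; lra.
  have : dot (hh w (z x)) a = dot (z x) u by rewrite -hhu hh_dot.
  rewrite dota E /h => E2.
  apply/eqP; rewrite -(can_eq (mulfK rne0)) E2; apply/eqP; field; exact: rne0.
pose g x := proj (hh w (z x)).
have zB : forall x y, z x - z y = f (Some x) - f (Some y).
  by move=> x y; rewrite /z opprB addrA subrK.
have gdist : forall x y, sqdist (g x) (g y) = sqdist (f (Some x)) (f (Some y)).
  move=> x y; rewrite !sqdist_dot.
  have -> : g x - g y = proj (hh w (z x - z y)).
    by apply/rowP => i; rewrite hhB !mxE.
  rewrite -zB -(hh_dot w) (dot_split (hh w _)) hhB.
  by rewrite rowB !lastz subrr mulr0 addr0.
have gg : forall x, dot (g x) (g x) = r ^+ 2 - h ^+ 2.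
  move=> x; rewrite -(fsph' (Some x)) -/(z x) -(hh_dot w) (dot_split (hh w _)) lastz.
  rewrite expr2; ring.
have rh0 : 0 <= r ^+ 2 - h ^+ 2 by rewrite -(gg x0); exact: dot_ge0.
exists (Num.sqrt (r ^+ 2 - h ^+ 2)).
have s2 : Num.sqrt (r ^+ 2 - h ^+ 2) ^+ 2 = r ^+ 2 - h ^+ 2 by rewrite sqr_sqrtr.
have s0 : 0 <= Num.sqrt (r ^+ 2 - h ^+ 2) by exact: sqrtr_ge0.
split.
  have : 0 <= h ^+ 2 by exact: sqr_ge0.
  nra.
split => //; exists g, 0; split; last first.
  by move=> x; rewrite sqdist_dot subr0 gg s2.
split; [|split].
- move=> x y gxy.
  have := gdist x y; rewrite gxy sqdist_refl => /esym /sqdist0 /finj; by case.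
- move=> x y exy; rewrite gdist; exact: (fedge (Some x) (Some y)).
- move=> x y v exy vx vy [t [t01 seg]].
  apply: (fseg (Some x) (Some y) (Some v) exy); [by []|by []|].
  exists t; split => //.
  set Z := z v - ((1 - t) *: z x + t *: z y).
  have HZ : hh w Z = 0.
    apply: dot_eq0; rewrite dot_split.
    have -> : proj (hh w Z) = 0.
      apply/rowP => i; move/rowP: seg => /(_ i).
      rewrite rowD !rowZ /g !projE row0.
      move=> E; rewrite /Z (hhB w (z v)) (hhD w ((1 - t) *: z x)) !hhZ (rowB (hh w (z v))) (rowD ((1 - t) *: hh w (z x))) !rowZ E.
      ring.
    rewrite dot0r add0r /Z (hhB w (z v)) (hhD w ((1 - t) *: z x)) !hhZ (rowB (hh w (z v))) (rowD ((1 - t) *: hh w (z x))) !rowZ !lastz; ring.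
  have Z0 : Z = 0 by apply: dot_eq0; rewrite -(hh_dot w) HZ dot0r.
  apply/rowP => i; move/rowP: Z0 => /(_ i); rewrite /Z /z !mxE => H0.
  lra.
Qed.

Theorem mainTheorem12 (T : finType) (e : rel T) :
  simple_graph e -> olt (sdim e) (sdim (plusK1 e)).
Proof.
move=> [sym irr].
have irrK : irreflexive (plusK1 e) by move=> [a|] /=; [exact: irr|].
have exK : exists k, `[< sdim_admissible (plusK1 e) k >].
  by exists #|{: option T}|; apply/asboolP; exact: simplex_adm.
rewrite /sdim card_option.
case: (pselect (exists k, `[< sdim_admissible (plusK1 e) k >])) => [H|[]]; last exact: exK.
case: (eqVneq #|T| 0%N) => [T0|Tn0]; first by rewrite T0.
rewrite /=.
move: Tn0; rewrite -lt0n => /card_gt0P [x0 _].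
case: ex_minnP => m /asboolP Hm _.
have [k' [-> adm]] := reduce x0 Hm.
case: (pselect (exists k, `[< sdim_admissible e k >])) => [H'|nH'].
  case: ex_minnP => m' _ Hmin'; rewrite /olt; apply: Hmin'; exact/asboolP.
by exfalso; apply: nH'; exists k'; apply/asboolP.
Qed.
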